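(* There is an absolute constant $C>0$ such that for all integers $2\le k\le n$ there exist speeds $v_1,\dots,v_n\in\mathbb{Z}$ taking exactly $k$ distinct values, and starting positions $s_1,\dots,s_n\in[0,1)$, such that for every $t\in\mathbb{R}$, $$B(s_1+v_1t,\dots,s_n+v_nt)\le C\sqrt{k\log k}.$$
   Context: For $r\in\mathbb{R}$, $\{r\}:=r-\lfloor r\rfloor$. The bias is $B(r_1,\dots,r_n):=\sup_{0\le a\le b\le1}\big|\,|\{i:\{r_i\}\in[a,b]\}|-n(b-a)\big|$. $\log$ is base 2. *)

(* Defs.v *)
From Stdlib Require Import Reals Lra Lia ZArith List.
Open Scope R_scope.

(* floor via Stdlib's Int_part (Int_part r = up r - 1 = floor r) *)
Definition frac (r : R) : R := r - IZR (Int_part r).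

Definition log2 (x : R) : R := ln x / ln 2.

Definition in_intervalb (a b x : R) : bool :=
  if Rle_dec a x then (if Rle_dec x b then true else false) else false.

Definition count_in (n : nat) (r : nat -> R) (a b : R) : nat :=
  length (filter (fun i => in_intervalb a b (frac (r i))) (seq 0 n)).

(* B(r_1..r_n) <= X  :  the supremum over 0<=a<=b<=1 is <= X, i.e. every
   quantity under the sup is <= X. *)
Definition bias_le (n : nat) (r : nat -> R) (X : R) : Prop :=
  forall a b : R, 0 <= a -> a <= b -> b <= 1 ->
    Rabs (INR (count_in n r a b) - INR n * (b - a)) <= X.

Definition takes_exactly (n k : nat) (v : nat -> Z) : Prop :=
  exists w : list Z, NoDup w /\ length w = k /\
    (forall i, (i < n)%nat -> In (v i) w) /\
    (forall z, In z w -> exists i, (i < n)%nat /\ v i = z).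

(* Main.v *)
Require Import Defs.
From Stdlib Require Import Reals ZArith List.
From Stdlib Require Import Lra Lia Classical Bool.
Open Scope R_scope.
Set Warnings "-deprecated".


Lemma Int_part_unique (x : R) (z : Z) :
  IZR z <= x < IZR z + 1 -> Int_part x = z.
Proof.
  intros [H1 H2]. unfold Int_part.
  assert (up x = (z + 1)%Z).
  { symmetry. apply tech_up; rewrite plus_IZR; lra. }
  lia.
Qed.

Lemma Int_part_spec (x : R) : IZR (Int_part x) <= x < IZR (Int_part x) + 1.
Proof. destruct (base_Int_part x). lra. Qed.

Lemma frac_range x : 0 <= frac x < 1.
Proof. unfold frac. destruct (Int_part_spec x). lra. Qed.

Lemma frac_of x z : IZR z <= x < IZR z + 1 -> frac x = x - IZR z.
Proof. intros H. unfold frac. rewrite (Int_part_unique x z H). reflexivity. Qed.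

Lemma frac_shift x z : frac (x + IZR z) = frac x.
Proof.
  destruct (Int_part_spec x) as [H1 H2].
  rewrite (frac_of (x + IZR z) (Int_part x + z)).
  - unfold frac. rewrite plus_IZR. ring.
  - rewrite plus_IZR. lra.
Qed.

Lemma frac_small z y : 0 <= y < 1 -> frac (IZR z + y) = y.
Proof. intros H. rewrite (frac_of _ z). ring. lra. Qed.

Lemma frac_frac x d : frac (x + d) = frac (frac x + d).
Proof.
  replace (frac x + d) with ((x + d) + IZR (- Int_part x)).
  - rewrite frac_shift. reflexivity.
  - unfold frac. rewrite opp_IZR. ring.
Qed.

Fixpoint sumn (n : nat) (f : nat -> R) : R :=
  match n with O => 0 | S p => sumn p f + f p end.

Lemma sumn_ext n f g : (forall i, (i < n)%nat -> f i = g i) -> sumn n f = sumn n g.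
Proof.
  induction n; simpl; intros H; [reflexivity|].
  rewrite IHn, H; auto; lia.
Qed.

Lemma sumn_plus n f g : sumn n (fun i => f i + g i) = sumn n f + sumn n g.
Proof. induction n; simpl; [ring|rewrite IHn; ring]. Qed.

Lemma sumn_minus n f g : sumn n (fun i => f i - g i) = sumn n f - sumn n g.
Proof. induction n; simpl; [ring|rewrite IHn; ring]. Qed.

Lemma sumn_scal n c f : sumn n (fun i => c * f i) = c * sumn n f.
Proof. induction n; simpl; [ring|rewrite IHn; ring]. Qed.

Lemma sumn_const n c : sumn n (fun _ => c) = INR n * c.
Proof. induction n; simpl sumn; [simpl; ring|rewrite IHn, S_INR; ring]. Qed.

Lemma sumn_app a b f : sumn (a + b) f = sumn a f + sumn b (fun i => f (a + i)%nat).
Proof.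
  induction b; simpl.
  - rewrite Nat.add_0_r. ring.
  - rewrite Nat.add_succ_r. simpl. rewrite IHb. ring.
Qed.

Lemma sumn_shift1 n f : sumn (S n) f = f O + sumn n (fun i => f (S i)).
Proof.
  induction n; simpl. ring. simpl in IHn. rewrite IHn. ring.
Qed.

Lemma sumn_block a m f :
  sumn (a * m) f = sumn a (fun i => sumn m (fun j => f (i * m + j)%nat)).
Proof.
  induction a; simpl; [reflexivity|].
  rewrite Nat.add_comm, sumn_app, IHa. ring_simplify. f_equal.
Qed.

Lemma sumn_le n f g : (forall i, (i < n)%nat -> f i <= g i) -> sumn n f <= sumn n g.
Proof.
  induction n; simpl; intros H; [lra|].
  assert (f n <= g n) by (apply H; lia).
  assert (sumn n f <= sumn n g) by (apply IHn; intros; apply H; lia). lra.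
Qed.

Definition ind (b : bool) : R := if b then 1 else 0.

Lemma ind_range b : 0 <= ind b <= 1.
Proof. destruct b; simpl; lra. Qed.

Lemma count_sumn (p : nat -> bool) s n :
  INR (length (filter p (seq s n))) = sumn n (fun i => ind (p (s + i)%nat)).
Proof.
  induction n; [reflexivity|].
  rewrite seq_S, filter_app, length_app, plus_INR, IHn. simpl.
  destruct (p (s + n)%nat); simpl; ring.
Qed.

Lemma sumn_ind_bound n (p : nat -> bool) : 0 <= sumn n (fun i => ind (p i)) <= INR n.
Proof.
  induction n; simpl sumn; [simpl; lra|]. rewrite S_INR. pose proof (ind_range (p n)). lra.
Qed.



Lemma sumn_rot1 m h : (0 < m)%nat ->
  sumn m (fun j => h ((j + 1) mod m)%nat) = sumn m h.
Proof.
  intros Hm. destruct m as [|m']; [lia|].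
  rewrite (sumn_shift1 m' h). cbn [sumn].
  rewrite (sumn_ext m' (fun j => h ((j+1) mod S m')%nat) (fun i => h (S i))).
  - replace ((m' + 1) mod S m')%nat with 0%nat. ring.
    replace (m' + 1)%nat with (1 * S m')%nat by lia. rewrite Nat.mod_mul; lia.
  - intros i Hi. f_equal. rewrite Nat.mod_small; lia.
Qed.

Lemma sumn_rot m p g : (0 < m)%nat ->
  sumn m (fun j => g ((j + p) mod m)%nat) = sumn m g.
Proof.
  intros Hm. induction p.
  - apply sumn_ext. intros i Hi. f_equal. rewrite Nat.add_0_r, Nat.mod_small; lia.
  - rewrite <- IHp.
    rewrite (sumn_ext m _ (fun j => (fun x => g ((x + p) mod m)%nat) ((j + 1) mod m)%nat)).
    + apply (sumn_rot1 m (fun x => g ((x+p) mod m)%nat) Hm).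
    + intros i Hi. f_equal. rewrite Nat.add_mod_idemp_l by lia. f_equal. lia.
Qed.

Lemma ltcount N B : sumn N (fun x => ind (x <? B)%nat) = INR (Nat.min B N).
Proof.
  induction N; simpl sumn.
  - rewrite Nat.min_0_r. reflexivity.
  - rewrite IHN. destruct (Nat.ltb_spec N B); simpl ind.
    + replace (Nat.min B (S N)) with (S (Nat.min B N)) by lia. rewrite S_INR. ring.
    + replace (Nat.min B (S N)) with (Nat.min B N) by lia. ring.
Qed.

Lemma interval_count N A B : (B <= N)%nat ->
  sumn N (fun x => ind ((A <=? x) && (x <? B))%nat) = INR (B - A).
Proof.
  intros HB. destruct (Nat.le_gt_cases A B) as [HAB|HAB].
  - rewrite (sumn_ext N _ (fun x => ind (x <? B)%nat - ind (x <? A)%nat)).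
    + rewrite sumn_minus, !ltcount. rewrite minus_INR by lia.
      replace (Nat.min B N) with B by lia. replace (Nat.min A N) with A by lia. reflexivity.
    + intros x _. destruct (Nat.leb_spec A x), (Nat.ltb_spec x B), (Nat.ltb_spec x A);
        simpl; try lra; lia.
  - replace (B - A)%nat with 0%nat by lia.
    rewrite (sumn_ext N _ (fun _ => 0)).
    + rewrite sumn_const. simpl; ring.
    + intros x _. destruct (Nat.leb_spec A x), (Nat.ltb_spec x B); simpl; try lra; lia.
Qed.

Lemma event_count N A B c : (0 < N)%nat -> (B <= N)%nat ->
  sumn N (fun x => ind ((A <=? (x + c) mod N) && ((x + c) mod N <? B))%nat) = INR (B - A).
Proof.
  intros HN HB.
  rewrite (sumn_rot N c (fun y => ind ((A <=? y) && (y <? B))%nat) HN).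
  apply interval_count; auto.
Qed.

Definition upd (l : nat -> nat) (K x : nat) : nat -> nat :=
  fun i => if Nat.eqb i K then x else l i.

Fixpoint Avg (N K : nat) (F : (nat -> nat) -> R) : R :=
  match K with
  | O => F (fun _ => O)
  | S K' => Avg N K' (fun l => / INR N * sumn N (fun x => F (upd l K' x)))
  end.

Lemma Avg_ext N K F G : (forall l, F l = G l) -> Avg N K F = Avg N K G.
Proof.
  revert F G. induction K; intros F G H; simpl; auto.
  apply IHK. intros l. f_equal. apply sumn_ext. intros; apply H.
Qed.

Lemma Avg_plus N K F G : Avg N K (fun l => F l + G l) = Avg N K F + Avg N K G.
Proof.
  revert F G. induction K; intros F G; simpl; auto.
  rewrite <- IHK. apply Avg_ext. intros l. rewrite sumn_plus. ring.
Qed.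

Lemma Avg_scal N K c F : Avg N K (fun l => c * F l) = c * Avg N K F.
Proof.
  revert F. induction K; intros F; simpl; auto.
  rewrite <- IHK. apply Avg_ext. intros l. rewrite sumn_scal. ring.
Qed.

Lemma Avg_const N K c : (0 < N)%nat -> Avg N K (fun _ => c) = c.
Proof.
  intros HN. induction K; simpl; auto.
  rewrite (Avg_ext N K _ (fun _ => c)); auto.
  intros l. rewrite sumn_const. field. apply not_0_INR; lia.
Qed.

Lemma Avg_le N K F G : (0 < N)%nat -> (forall l, F l <= G l) -> Avg N K F <= Avg N K G.
Proof.
  intros HN. revert F G. induction K; intros F G H; simpl; auto.
  apply IHK. intros l. apply Rmult_le_compat_l.
  - left. apply Rinv_0_lt_compat, lt_0_INR; auto.
  - apply sumn_le; auto.
Qed.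

Fixpoint prodn (n : nat) (f : nat -> R) : R :=
  match n with O => 1 | S p => prodn p f * f p end.

Lemma prodn_ext n f g : (forall i, (i < n)%nat -> f i = g i) -> prodn n f = prodn n g.
Proof.
  induction n; simpl; intros H; [reflexivity|].
  rewrite IHn, H; auto; lia.
Qed.

Lemma Avg_prod N K g :
  Avg N K (fun l => prodn K (fun i => g i (l i))) =
  prodn K (fun i => / INR N * sumn N (g i)).
Proof.
  induction K; simpl; auto.
  rewrite <- IHK.
  rewrite (Avg_ext N K _ (fun l => prodn K (fun i => g i (l i)) * (/ INR N * sumn N (g K)))).
  - rewrite (Avg_ext N K (fun l => prodn K (fun i => g i (l i)) * (/ INR N * sumn N (g K)))
       (fun l => (/ INR N * sumn N (g K)) * prodn K (fun i => g i (l i)))).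
    + rewrite Avg_scal. ring.
    + intros; ring.
  - intros l. rewrite <- sumn_scal, <- sumn_scal. rewrite <- sumn_scal.
    apply sumn_ext. intros x _.
    rewrite (prodn_ext K (fun i => g i (upd l K x i)) (fun i => g i (l i))).
    + unfold upd. rewrite Nat.eqb_refl. ring.
    + intros i Hi. unfold upd. destruct (Nat.eqb_spec i K); [lia|reflexivity].
Qed.

Lemma avg_exists N f c : (0 < N)%nat -> / INR N * sumn N f < c -> exists x, (x < N)%nat /\ f x < c.
Proof.
  intros HN H. apply NNPP. intros Hno.
  assert (Hall : forall x, (x < N)%nat -> c <= f x).
  { intros x Hx. apply Rnot_lt_le. intros Hlt. apply Hno. exists x; auto. }
  assert (sumn N (fun _ => c) <= sumn N f) by (apply sumn_le; auto).
  rewrite sumn_const in H0.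
  assert (0 < INR N) by (apply lt_0_INR; auto).
  assert (c <= / INR N * sumn N f).
  { apply (Rmult_le_reg_l (INR N)); auto. rewrite <- Rmult_assoc, Rinv_r; lra. }
  lra.
Qed.

Lemma Avg_exists N K F c : (0 < N)%nat -> Avg N K F < c ->
  exists l, (forall i, (i < K)%nat -> (l i < N)%nat) /\ F l < c.
Proof.
  intros HN. revert F. induction K; intros F H; simpl in H.
  - exists (fun _ => O). split; [intros; lia|auto].
  - destruct (IHK _ H) as [l [Hl Hc]].
    destruct (avg_exists N _ c HN Hc) as [x [Hx Hf]].
    exists (upd l K x). split; auto.
    intros i Hi. unfold upd. destruct (Nat.eqb_spec i K); auto. apply Hl; lia.
Qed.


Definition sumL {X : Type} (E : list X) (f : X -> R) : R :=
  fold_right (fun e acc => f e + acc) 0 E.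

Lemma sumL_le {X} (E : list X) f g : (forall e, In e E -> f e <= g e) -> sumL E f <= sumL E g.
Proof.
  induction E; simpl; intros H; [lra|].
  assert (f a <= g a) by auto. assert (sumL E f <= sumL E g) by auto. lra.
Qed.

Lemma sumL_const {X} (E : list X) c : sumL E (fun _ => c) = INR (length E) * c.
Proof. induction E; simpl sumL; [simpl; ring|]. rewrite IHE. simpl length. rewrite S_INR. ring. Qed.

Lemma sumL_nonneg {X} (E : list X) f : (forall e, In e E -> 0 <= f e) -> 0 <= sumL E f.
Proof.
  induction E as [|a E IH]; simpl; intros H; [lra|].
  assert (0 <= f a) by auto. assert (0 <= sumL E f) by auto. lra.
Qed.

Lemma sumL_elem {X} (E : list X) f e : (forall e, In e E -> 0 <= f e) -> In e E -> f e <= sumL E f.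
Proof.
  induction E as [|a E IH]; simpl; intros H Hin; [contradiction|].
  assert (0 <= sumL E f) by (apply sumL_nonneg; auto).
  destruct Hin as [->|Hin].
  - lra.
  - assert (0 <= f a) by auto. assert (f e <= sumL E f) by auto. lra.
Qed.

Lemma Avg_sumL {X} N K (E : list X) G : (0 < N)%nat ->
  Avg N K (fun l => sumL E (fun e => G e l)) = sumL E (fun e => Avg N K (G e)).
Proof.
  intros HN. induction E; simpl.
  - apply Avg_const; auto.
  - rewrite Avg_plus, IHE. reflexivity.
Qed.

Lemma exp_sumn n f : exp (sumn n f) = prodn n (fun i => exp (f i)).
Proof. induction n; simpl; [apply exp_0|]. rewrite exp_plus, IHn. reflexivity. Qed.

Lemma prodn_bound n f a : (forall i, (i < n)%nat -> 0 <= f i <= exp a) ->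
  0 <= prodn n f <= exp (INR n * a).
Proof.
  induction n; intros H; simpl prodn.
  - simpl. rewrite Rmult_0_l, exp_0. lra.
  - assert (H1 : 0 <= prodn n f <= exp (INR n * a)) by (apply IHn; intros; apply H; lia).
    assert (H2 : 0 <= f n <= exp a) by (apply H; lia).
    rewrite S_INR. replace ((INR n + 1) * a) with (INR n * a + a) by ring.
    rewrite exp_plus. split; [nra|]. apply Rmult_le_compat; lra.
Qed.

Lemma exp_quad y : y <= 1/2 -> exp y <= 1 + y + 2 * y ^ 2.
Proof.
  intros Hy.
  assert (H1 : 1 + - y <= exp (- y)) by apply exp_ineq1_le.
  assert (H2 : exp y * exp (- y) = 1) by (rewrite <- exp_plus; replace (y + - y) with 0 by ring; apply exp_0).
  assert (H3 : 0 < exp y) by apply exp_pos.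
  assert (H4 : exp y * (1 - y) <= 1) by nra.
  assert (H5 : 1 <= (1 + y + 2 * y ^ 2) * (1 - y)) by nra.
  apply (Rmult_le_reg_r (1 - y)); lra.
Qed.

Lemma Rabs_le_inv' a b : Rabs a <= b -> - b <= a <= b.
Proof. unfold Rabs. destruct (Rcase_abs a); intros; lra. Qed.

Lemma factor_bound p lam : 0 <= p <= 1 -> Rabs lam <= 1/2 ->
  p * exp (lam * (1 - p)) + (1 - p) * exp (- (lam * p)) <= exp (lam ^ 2 / 2).
Proof.
  intros Hp Hl. apply Rabs_le_inv' in Hl.
  assert (A : exp (lam * (1 - p)) <= 1 + lam * (1 - p) + 2 * (lam * (1 - p)) ^ 2)
    by (apply exp_quad; assert (0 <= (1/2 - lam) * (1 - p)) by (apply Rmult_le_pos; lra); nra).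
  assert (B : exp (- (lam * p)) <= 1 + - (lam * p) + 2 * (- (lam * p)) ^ 2)
    by (apply exp_quad; assert (0 <= (1/2 + lam) * p) by (apply Rmult_le_pos; lra); nra).
  assert (C : 1 + lam ^ 2 / 2 <= exp (lam ^ 2 / 2)) by apply exp_ineq1_le.
  assert (D : p * exp (lam * (1 - p)) <= p * (1 + lam * (1 - p) + 2 * (lam * (1 - p)) ^ 2))
    by (apply Rmult_le_compat_l; lra).
  assert (E : (1 - p) * exp (- (lam * p)) <= (1 - p) * (1 + - (lam * p) + 2 * (- (lam * p)) ^ 2))
    by (apply Rmult_le_compat_l; lra).
  assert (F : p * (1 + lam * (1 - p) + 2 * (lam * (1 - p)) ^ 2) +
              (1 - p) * (1 + - (lam * p) + 2 * (- (lam * p)) ^ 2) = 1 + 2 * lam^2 * (p * (1 - p)))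
    by ring.
  assert (G : p * (1 - p) <= 1/4).
  { pose proof (Rle_0_sqr (p - 1/2)) as Hs. unfold Rsqr in Hs. nra. }
  assert (0 <= lam ^ 2) by nra.
  assert (0 <= lam ^ 2 * (1/4 - p * (1 - p))) by (apply Rmult_le_pos; lra).
  lra.
Qed.

Lemma coord_avg N (Q : nat -> bool) c lam : (0 < N)%nat ->
  sumn N (fun x => ind (Q x)) = INR c ->
  / INR N * sumn N (fun x => exp (lam * (ind (Q x) - INR c / INR N))) =
  (INR c / INR N) * exp (lam * (1 - INR c / INR N)) + (1 - INR c / INR N) * exp (- (lam * (INR c / INR N))).
Proof.
  intros HN Hc. set (p := INR c / INR N).
  rewrite (sumn_ext N _ (fun x => ind (Q x) * (exp (lam * (1 - p)) - exp (- (lam * p))) + exp (- (lam * p)))).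
  - rewrite sumn_plus, sumn_const.
    rewrite (sumn_ext N _ (fun x => (exp (lam * (1 - p)) - exp (- (lam * p))) * ind (Q x))) by (intros; ring).
    rewrite sumn_scal, Hc. unfold p. field. apply not_0_INR; lia.
  - intros x _. destruct (Q x); simpl ind.
    + ring.
    + replace (lam * (0 - p)) with (- (lam * p)) by ring. ring.
Qed.

Lemma term_bound N K (Q : nat -> nat -> bool) c sg : (0 < N)%nat -> (c <= N)%nat ->
  (forall i, (i < K)%nat -> sumn N (fun x => ind (Q i x)) = INR c) -> Rabs sg <= 1/2 ->
  Avg N K (fun l => exp (sg * (sumn K (fun i => ind (Q i (l i))) - INR K * INR c / INR N)))
  <= exp (INR K * (sg ^ 2 / 2)).
Proof.
  intros HN HcN Hc Hs. set (p := INR c / INR N).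
  assert (Hp : 0 <= p <= 1).
  { unfold p. assert (0 < INR N) by (apply lt_0_INR; auto). split.
    - unfold Rdiv. apply Rmult_le_pos; [apply pos_INR|left; apply Rinv_0_lt_compat; lra].
    - apply Rmult_le_reg_r with (INR N); auto. unfold Rdiv. rewrite Rmult_assoc, Rinv_l by lra.
      rewrite Rmult_1_r, Rmult_1_l. apply le_INR; auto. }
  rewrite (Avg_ext N K _ (fun l => prodn K (fun i => (fun i x => exp (sg * (ind (Q i x) - p))) i (l i)))).
  - rewrite (Avg_prod N K (fun i x => exp (sg * (ind (Q i x) - p)))). apply prodn_bound. intros i Hi.
    unfold p. rewrite (coord_avg N (Q i) c sg HN (Hc i Hi)). fold p. split.
    + apply Rplus_le_le_0_compat; apply Rmult_le_pos; try lra; left; apply exp_pos.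
    + apply factor_bound; auto.
  - intros l. rewrite <- exp_sumn. f_equal.
    rewrite (sumn_ext K (fun i => sg * (ind (Q i (l i)) - p)) (fun i => sg * ind (Q i (l i)) - sg * p)) by (intros; ring).
    rewrite sumn_minus, sumn_scal, sumn_const. unfold p. field. apply not_0_INR; lia.
Qed.

Lemma exp_lt1 x : exp x < 1 -> x < 0.
Proof. intros H. destruct (Rlt_or_le x 0); auto. pose proof (exp_ineq1_le x). lra. Qed.

Lemma partA (N K : nat) (X : Type) (E : list X) (P : X -> nat -> nat -> bool)
  (cnt : X -> nat) (u : R) :
  (0 < N)%nat -> (0 < K)%nat -> 0 < u -> u <= INR K / 2 ->
  (forall e i, In e E -> (i < K)%nat -> sumn N (fun x => ind (P e i x)) = INR (cnt e)) ->
  2 * INR (length E) * exp (- (u * u) / (2 * INR K)) < 1 ->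
  exists l, (forall i, (i < K)%nat -> (l i < N)%nat) /\
    forall e, In e E ->
      Rabs (sumn K (fun i => ind (P e i (l i))) - INR K * INR (cnt e) / INR N) <= u.
Proof.
  intros HN HK Hu HuK Hcnt Hunion.
  assert (HKr : 0 < INR K) by (apply lt_0_INR; auto).
  set (lam := u / INR K).
  assert (Hlam : 0 < lam) by (unfold lam; apply Rdiv_lt_0_compat; auto).
  assert (Hlam2 : Rabs lam <= 1/2).
  { rewrite Rabs_right by lra. unfold lam. apply Rmult_le_reg_r with (INR K); auto.
    unfold Rdiv. rewrite Rmult_assoc, Rinv_l by lra. lra. }
  set (Sm := fun e l => sumn K (fun i => ind (P e i (l i))) - INR K * INR (cnt e) / INR N).
  set (Bad := fun l => sumL E (fun e => exp (- (lam * u)) * (exp (lam * Sm e l) + exp ((- lam) * Sm e l)))).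
  assert (HcN : forall e, In e E -> (cnt e <= N)%nat).
  { intros e He. apply INR_le. rewrite <- (Hcnt e 0%nat He HK).
    apply (sumn_ind_bound N (P e 0%nat)). }
  assert (Havg : Avg N K Bad <= 2 * INR (length E) * exp (- (u * u) / (2 * INR K))).
  { unfold Bad. rewrite Avg_sumL by auto.
    eapply Rle_trans.
    - apply sumL_le with (g := fun _ => exp (- (lam * u)) * (2 * exp (INR K * (lam ^ 2 / 2)))).
      intros e He. rewrite Avg_scal, Avg_plus. apply Rmult_le_compat_l; [left; apply exp_pos|].
      assert (H1 := term_bound N K (P e) (cnt e) lam HN (HcN e He) (fun i Hi => Hcnt e i He Hi) Hlam2).
      assert (H2 := term_bound N K (P e) (cnt e) (- lam) HN (HcN e He) (fun i Hi => Hcnt e i He Hi)).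
      rewrite Rabs_Ropp in H2. specialize (H2 Hlam2).
      replace ((- lam) ^ 2) with (lam ^ 2) in H2 by ring.
      unfold Sm. lra.
    - rewrite sumL_const. right.
      replace (exp (- (u * u) / (2 * INR K))) with (exp (- (lam * u)) * exp (INR K * (lam ^ 2 / 2))).
      + ring.
      + rewrite <- exp_plus. f_equal. unfold lam. field. lra. }
  destruct (Avg_exists N K Bad 1 HN) as [l [Hl Hbad]]; [lra|].
  exists l. split; auto. intros e He.
  assert (Hle : exp (- (lam * u)) * (exp (lam * Sm e l) + exp ((- lam) * Sm e l)) <= Bad l).
  { unfold Bad. apply (sumL_elem E (fun e => exp (- (lam * u)) * (exp (lam * Sm e l) + exp ((- lam) * Sm e l)))); auto.
    intros e' _. apply Rmult_le_pos; [left; apply exp_pos|].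
    apply Rplus_le_le_0_compat; left; apply exp_pos. }
  rewrite Rmult_plus_distr_l, <- !exp_plus in Hle.
  pose proof (exp_pos (- (lam * u) + lam * Sm e l)).
  pose proof (exp_pos (- (lam * u) + - lam * Sm e l)).
  assert (A1 := exp_lt1 (- (lam * u) + lam * Sm e l) ltac:(lra)).
  assert (A2 := exp_lt1 (- (lam * u) + - lam * Sm e l) ltac:(lra)).
  fold (Sm e l). apply Rabs_le. split; nra.
Qed.


Definition cell (N : nat) (y : R) : nat := Z.to_nat (Int_part (INR N * y)).

Lemma INR_Z2N z : (0 <= z)%Z -> INR (Z.to_nat z) = IZR z.
Proof. intros H. rewrite INR_IZR_INZ, Z2Nat.id; auto. Qed.

Lemma cell_spec N y : (0 < N)%nat -> 0 <= y < 1 ->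
  (cell N y < N)%nat /\ INR (cell N y) <= INR N * y < INR (cell N y) + 1.
Proof.
  intros HN Hy. unfold cell.
  assert (HNr : 0 < INR N) by (apply lt_0_INR; auto).
  destruct (Int_part_spec (INR N * y)) as [H1 H2].
  assert (Hz : (0 <= Int_part (INR N * y))%Z).
  { apply le_IZR. assert (-1 < IZR (Int_part (INR N * y))) by nra.
    destruct (Z_lt_le_dec (Int_part (INR N * y)) 0) as [Hl|Hl]; [|apply IZR_le; auto].
    assert (IZR (Int_part (INR N * y)) <= -1) by (apply IZR_le; lia). lra. }
  rewrite INR_Z2N by auto. split; [|lra].
  apply INR_lt. rewrite INR_Z2N by auto. nra.
Qed.

Lemma cell_unique N y c : INR c <= INR N * y < INR c + 1 -> cell N y = c.
Proof.
  intros H. unfold cell. rewrite (Int_part_unique _ (Z.of_nat c)).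
  - apply Nat2Z.id.
  - rewrite <- INR_IZR_INZ. auto.
Qed.

Lemma cell_shift N l y : (0 < N)%nat -> (l < N)%nat ->
  cell N (frac (INR l / INR N + y)) = ((l + cell N (frac y)) mod N)%nat.
Proof.
  intros HN Hl.
  assert (HNr : 0 < INR N) by (apply lt_0_INR; auto).
  set (c := cell N (frac y)).
  destruct (cell_spec N (frac y) HN (frac_range y)) as [Hc [Hc1 Hc2]]. fold c in Hc, Hc1, Hc2.
  set (r := ((l + c) mod N)%nat). set (dq := ((l + c) / N)%nat).
  assert (Hdm : (l + c = N * dq + r)%nat) by (apply Nat.div_mod; lia).
  assert (Hr : (r < N)%nat) by (apply Nat.mod_upper_bound; lia).
  assert (Hrr : INR r + 1 <= INR N) by (rewrite <- S_INR; apply le_INR; lia).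
  rewrite Rplus_comm, frac_frac, Rplus_comm.
  set (e := INR N * frac y - INR c).
  assert (Heq : INR l / INR N + frac y = IZR (Z.of_nat dq) + (INR r + e) / INR N).
  { rewrite <- INR_IZR_INZ. unfold e.
    assert (INR l + INR c = INR N * INR dq + INR r) by (rewrite <- plus_INR, <- mult_INR, <- plus_INR; f_equal; auto).
    field_simplify_eq; [|lra]. lra. }
  rewrite Heq, frac_small.
  - apply cell_unique. replace (INR N * ((INR r + e) / INR N)) with (INR r + e) by (field; lra).
    unfold e. lra.
  - split.
    + apply Rmult_le_pos; [|left; apply Rinv_0_lt_compat; lra]. pose proof (pos_INR r). unfold e; lra.
    + apply Rmult_lt_reg_r with (INR N); auto. unfold Rdiv. rewrite Rmult_assoc, Rinv_l by lra.
      unfold e. lra.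
Qed.

Lemma cell_step N x d : (0 < N)%nat -> 0 <= x < 1 -> 0 <= d < / INR N ->
  cell N (frac (x + d)) = cell N x \/ cell N (frac (x + d)) = S (cell N x) \/
  (S (cell N x) = N /\ cell N (frac (x + d)) = 0%nat).
Proof.
  intros HN Hx Hd.
  assert (HNr : 0 < INR N) by (apply lt_0_INR; auto).
  destruct (cell_spec N x HN Hx) as [Hc [Hc1 Hc2]]. set (c := cell N x) in *.
  assert (HNd : INR N * d < 1).
  { apply Rmult_lt_reg_l with (/ INR N). apply Rinv_0_lt_compat; lra.
    rewrite <- Rmult_assoc, Rinv_l by lra. lra. }
  assert (HcN : INR c + 1 <= INR N) by (rewrite <- S_INR; apply le_INR; lia).
  assert (HNd0 : 0 <= INR N * d) by (apply Rmult_le_pos; lra).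
  destruct (Rlt_or_le (x + d) 1) as [Hlt|Hge].
  - rewrite (frac_of (x + d) 0) by (simpl; lra). rewrite Rminus_0_r.
    destruct (Rlt_or_le (INR N * (x + d)) (INR c + 1)).
    + left. apply cell_unique. rewrite Rmult_plus_distr_l in *. lra.
    + right; left. apply cell_unique. rewrite S_INR. rewrite Rmult_plus_distr_l in *. lra.
  - assert (HNd2 : d < 1) by (assert (1 <= INR N) by (apply (le_INR 1); lia); nra).
    rewrite (frac_of (x + d) 1) by lra.
    right; right.
    assert (Hc' : S c = N).
    { assert (INR N <= INR N * (x + d)) by (rewrite <- (Rmult_1_r (INR N)) at 1; apply Rmult_le_compat_l; lra).
      assert (INR N < INR c + 2) by (rewrite Rmult_plus_distr_l in *; lra).
      assert (Hq : INR N < INR (S (S c))) by (rewrite !S_INR; lra).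
      apply INR_lt in Hq. lia. }
    split; auto. apply cell_unique. simpl INR.
    assert (INR (S c) = INR N) by (rewrite Hc'; reflexivity). rewrite S_INR in H.
    assert (INR N <= INR N * (x + d)) by (rewrite <- (Rmult_1_r (INR N)) at 1; apply Rmult_le_compat_l; lra).
    replace (INR N * (x + d - 1)) with (INR N * x + INR N * d - INR N) by ring.
    rewrite Rmult_plus_distr_l in *. lra.
Qed.

Lemma time_net N W v tau : (0 < N)%nat -> (0 < W)%nat -> (v <= W)%nat ->
  let T := (N * W)%nat in
  let j := cell T (frac tau) in
  (j < T)%nat /\
  forall s, exists d, 0 <= d < / INR N /\
    frac (s + INR v * tau) = frac (frac (s + INR v * (INR j / INR T)) + d).
Proof.
  intros HN HW Hv T j.
  assert (HT : (0 < T)%nat) by (unfold T; lia).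
  assert (HTr : 0 < INR T) by (apply lt_0_INR; auto).
  assert (HNr : 0 < INR N) by (apply lt_0_INR; auto).
  assert (HWr : 0 < INR W) by (apply lt_0_INR; auto).
  destruct (cell_spec T (frac tau) HT (frac_range tau)) as [Hj [Hj1 Hj2]]. fold j in Hj, Hj1, Hj2.
  split; auto. intros s.
  set (f := frac tau). set (tj := INR j / INR T).
  exists (INR v * (f - tj)).
  assert (Hf1 : tj <= f).
  { unfold tj, f. apply Rmult_le_reg_l with (INR T); auto.
    replace (INR T * (INR j / INR T)) with (INR j) by (field; lra). lra. }
  assert (Hf2 : f - tj < / INR T).
  { unfold tj, f. apply Rmult_lt_reg_l with (INR T); auto.
    replace (INR T * (frac tau - INR j / INR T)) with (INR T * frac tau - INR j) by (field; lra).
    rewrite Rinv_r by lra. lra. }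
  assert (HvW : INR v <= INR W) by (apply le_INR; auto).
  assert (HTNW : INR T = INR N * INR W) by (unfold T; apply mult_INR).
  split.
  - split; [apply Rmult_le_pos; [apply pos_INR|lra]|].
    apply Rle_lt_trans with (INR W * (f - tj)).
    + apply Rmult_le_compat_r; lra.
    + apply Rmult_lt_reg_l with (INR T); auto. rewrite HTNW.
      replace (INR N * INR W * / INR N) with (INR W) by (field; lra).
      assert (H1 : INR N * INR W * (f - tj) < 1).
      { rewrite HTNW in Hf2. apply Rmult_lt_compat_l with (r := INR N * INR W) in Hf2; [|nra].
        rewrite Rinv_r in Hf2 by nra. lra. }
      replace (INR N * INR W * (INR W * (f - tj))) with (INR W * (INR N * INR W * (f - tj))) by ring.
      assert (INR W * (INR N * INR W * (f - tj)) < INR W * 1) by (apply Rmult_lt_compat_l; lra). lra.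
  - rewrite <- frac_frac.
    replace (s + INR v * tau) with (s + INR v * tj + INR v * (f - tj) + IZR (Z.of_nat v * Int_part tau)).
    + rewrite frac_shift. reflexivity.
    + rewrite mult_IZR, <- INR_IZR_INZ. unfold f, frac. ring.
Qed.


Definition phi (N : nat) (l spd : nat -> nat) (tau : R) (i : nat) : R :=
  frac (INR (l i) / INR N + INR (spd i) * tau).

Definition Rleb (x y : R) : bool := if Rle_dec x y then true else false.
Definition Rltb (x y : R) : bool := if Rlt_dec x y then true else false.

Definition Cnt N K l spd tau A B :=
  sumn K (fun i => ind ((A <=? cell N (phi N l spd tau i)) && (cell N (phi N l spd tau i) <? B))%nat).

Definition Good N K W l spd U := forall j A B, (j < N * W)%nat -> (A <= N)%nat -> (B <= N)%nat ->
  Rabs (Cnt N K l spd (INR j / INR (N * W)) A B - INR K * INR (B - A) / INR N) <= U.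

Lemma exp_le x y : x <= y -> exp x <= exp y.
Proof. intros [H|H]; [left; apply exp_increasing; auto|right; subst; auto]. Qed.

Lemma good_exists N K W (spd : nat -> nat) u :
  (0 < N)%nat -> (0 < W)%nat -> (K <= N)%nat -> 0 < u ->
  2 * INR ((N * W) * (S N * S N)) * exp (- (u * u) / (2 * INR N)) < 1 ->
  exists l, (forall i, (i < K)%nat -> (l i < N)%nat) /\ Good N K W l spd (2 * u).
Proof.
  intros HN HW HKN Hu Hunion.
  assert (HNr : 0 < INR N) by (apply lt_0_INR; auto).
  destruct (Nat.eq_0_gt_0_cases K) as [HK0|HK].
  - subst K. exists (fun _ => O). split; [intros; lia|].
    intros j A B _ _ _. unfold Cnt. simpl sumn. rewrite Rmult_0_l.
    unfold Rdiv. rewrite Rmult_0_l, Rminus_0_r, Rabs_R0. lra.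
  - destruct (Rle_or_lt u (INR K / 2)) as [HuK|HuK].
    2:{ exists (fun _ => O). split; [intros; lia|].
        intros j A B _ HA HB. unfold Cnt.
        match goal with |- Rabs (sumn K ?f - _) <= _ => idtac end.
        pose proof (sumn_ind_bound K (fun i => ((A <=? cell N (phi N (fun _ => 0%nat) spd (INR j / INR (N * W)) i)) && (cell N (phi N (fun _ => 0%nat) spd (INR j / INR (N * W)) i) <? B))%nat)) as Hb.
        assert (HBA : INR (B - A) <= INR N) by (apply le_INR; lia).
        assert (0 <= INR K * INR (B - A) / INR N <= INR K).
        { split.
          - unfold Rdiv. apply Rmult_le_pos; [apply Rmult_le_pos; apply pos_INR|left; apply Rinv_0_lt_compat; lra].
          - apply Rmult_le_reg_r with (INR N); auto. unfold Rdiv. rewrite Rmult_assoc, Rinv_l by lra.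
            rewrite Rmult_1_r. apply Rmult_le_compat_l; [apply pos_INR|lra]. }
        apply Rabs_le. lra. }
    set (T := (N * W)%nat).
    set (c := fun i j => cell N (frac (INR (spd i) * (INR j / INR T)))).
    set (E := list_prod (seq 0 T) (list_prod (seq 0 (S N)) (seq 0 (S N)))).
    set (P := fun (e : nat * (nat * nat)) i x => let '(j, (A, B)) := e in
                ((A <=? (x + c i j) mod N) && ((x + c i j) mod N <? B))%nat).
    set (cnt := fun (e : nat * (nat * nat)) => let '(j, (A, B)) := e in (B - A)%nat).
    destruct (partA N K _ E P cnt u HN HK Hu HuK) as [l [Hl Hgood]].
    + intros [j [A B]] i He Hi. unfold E in He. apply in_prod_iff in He as [Hj HAB].
      apply in_prod_iff in HAB as [HA HB]. apply in_seq in HB.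
      simpl. apply event_count; auto; lia.
    + unfold E. rewrite !length_prod, !length_seq.
      assert (HKr : 0 < INR K) by (apply lt_0_INR; auto).
      assert (HKN' : INR K <= INR N) by (apply le_INR; auto).
      eapply Rle_lt_trans; [|exact Hunion].
      apply Rmult_le_compat_l; [apply Rmult_le_pos; [lra|apply pos_INR]|].
      apply exp_le. unfold Rdiv. rewrite !Ropp_mult_distr_l.
      apply Rmult_le_compat_neg_l.
      * pose proof (Rle_0_sqr u). unfold Rsqr in H. lra.
      * apply Rinv_le_contravar; lra.
    + exists l. split; auto. intros j A B Hj HA HB.
      assert (He : In (j, (A, B)) E).
      { unfold E. apply in_prod_iff. split; [apply in_seq; lia|].
        apply in_prod_iff. split; apply in_seq; lia. }
      eapply Rle_trans; [|apply Rmult_le_compat_r; [lra|] ; apply (Rle_refl 2) || lra].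
      specialize (Hgood _ He). simpl in Hgood.
      replace (Cnt N K l spd (INR j / INR (N * W)) A B) with
        (sumn K (fun i => ind ((A <=? (l i + c i j) mod N) && ((l i + c i j) mod N <? B))%nat)).
      * lra.
      * unfold Cnt. apply sumn_ext. intros i Hi. unfold phi. rewrite cell_shift; auto.
Qed.


Lemma sandwich N K W l spd U tau G : (0 < N)%nat -> (0 < W)%nat ->
  (forall i, (spd i <= W)%nat) -> Good N K W l spd U -> (G <= N)%nat ->
  Cnt N K l spd tau 0 G <= INR K * INR G / INR N + INR K / INR N + 2 * U /\
  INR K * (INR G - 1) / INR N - U <= Cnt N K l spd tau 0 G.
Proof.
  intros HN HW Hspd Hg HG.
  assert (HNr : 0 < INR N) by (apply lt_0_INR; auto).
  set (T := (N * W)%nat). set (j := cell T (frac tau)).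
  assert (Hj : (j < T)%nat) by (destruct (time_net N W 0 tau HN HW ltac:(lia)); auto).
  set (tj := INR j / INR T).
  assert (Hrel : forall i,
    let r := cell N (phi N l spd tau i) in let rj := cell N (phi N l spd tj i) in
    (rj < N)%nat /\ (r = rj \/ r = S rj \/ (S rj = N /\ r = 0%nat))).
  { intros i r rj.
    destruct (time_net N W (spd i) tau HN HW (Hspd i)) as [_ Hd].
    destruct (Hd (INR (l i) / INR N)) as [d [Hd1 Hd2]].
    split.
    - apply cell_spec; auto. apply frac_range.
    - unfold r, rj, phi. fold T j tj in Hd2. rewrite Hd2. apply cell_step; auto. apply frac_range. }
  assert (HU := Hg j 0%nat G Hj ltac:(lia) HG).
  assert (HU2 := Hg j (N - 1)%nat N Hj ltac:(lia) ltac:(lia)).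
  assert (HU3 := Hg j 0%nat (G - 1)%nat Hj ltac:(lia) ltac:(lia)).
  fold T tj in HU, HU2, HU3.
  replace (N - (N - 1))%nat with 1%nat in HU2 by lia. rewrite Nat.sub_0_r in HU, HU3.
  apply Rabs_le_inv' in HU. apply Rabs_le_inv' in HU2. apply Rabs_le_inv' in HU3.
  assert (HG1 : INR G - 1 <= INR (G - 1)).
  { destruct G as [|G']. - simpl. lra. - replace (S G' - 1)%nat with G' by lia. rewrite S_INR. lra. }
  assert (HK : 0 <= INR K / INR N) by (unfold Rdiv; apply Rmult_le_pos; [apply pos_INR|left; apply Rinv_0_lt_compat; lra]).
  split.
  - assert (Cnt N K l spd tau 0 G <= Cnt N K l spd tj 0 G + Cnt N K l spd tj (N - 1) N).
    { unfold Cnt. rewrite <- sumn_plus. apply sumn_le. intros i _.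
      destruct (Hrel i) as [Hlt Hc]. simpl in Hc.
      destruct Hc as [->|[->|[Hw ->]]];
        destruct (Nat.ltb_spec (cell N (phi N l spd tj i)) G);
        destruct (Nat.leb_spec (N - 1) (cell N (phi N l spd tj i)));
        destruct (Nat.ltb_spec (cell N (phi N l spd tj i)) N); simpl;
        try (destruct (Nat.ltb_spec (S (cell N (phi N l spd tj i))) G)); simpl; try lra; try lia;
        destruct (Nat.ltb_spec 0 G); simpl; lra. }
    replace (INR K * INR 1 / INR N) with (INR K / INR N) in HU2 by (simpl; field; apply not_0_INR; lia). lra.
  - assert (Cnt N K l spd tj 0 (G - 1) <= Cnt N K l spd tau 0 G).
    { unfold Cnt. apply sumn_le. intros i _.
      destruct (Hrel i) as [Hlt Hc]. simpl in Hc.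
      destruct Hc as [->|[->|[Hw ->]]];
        repeat match goal with
        | |- context [Nat.ltb ?a ?b] => destruct (Nat.ltb_spec a b)
        | |- context [Nat.leb ?a ?b] => destruct (Nat.leb_spec a b)
        end; simpl; try lra; lia. }
    assert (INR K * (INR G - 1) / INR N <= INR K * INR (G - 1) / INR N).
    { unfold Rdiv. apply Rmult_le_compat_r; [left; apply Rinv_0_lt_compat; lra|].
      apply Rmult_le_compat_l; [apply pos_INR|lra]. }
    lra.
Qed.


Lemma phase_bound N K W l spd U tau gam : (0 < N)%nat -> (0 < W)%nat ->
  (forall i, (spd i <= W)%nat) -> Good N K W l spd U -> (K <= N)%nat -> 0 <= U ->
  0 <= gam < 1 ->
  Rabs (sumn K (fun i => ind (Rleb (phi N l spd tau i) gam)) - INR K * gam) <= 2 * U + 2 /\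
  Rabs (sumn K (fun i => ind (Rltb (phi N l spd tau i) gam)) - INR K * gam) <= 2 * U + 2.
Proof.
  intros HN HW Hspd Hg HKN HU Hgam.
  assert (HNr : 0 < INR N) by (apply lt_0_INR; auto).
  destruct (cell_spec N gam HN Hgam) as [Hgl [Hg1 Hg2]]. set (g := cell N gam) in *.
  destruct (sandwich N K W l spd U tau g HN HW Hspd Hg ltac:(lia)) as [_ Hlo].
  destruct (sandwich N K W l spd U tau (S g) HN HW Hspd Hg ltac:(lia)) as [Hhi _].
  set (LE := sumn K (fun i => ind (Rleb (phi N l spd tau i) gam))).
  set (LT := sumn K (fun i => ind (Rltb (phi N l spd tau i) gam))).
  assert (H1 : Cnt N K l spd tau 0 g <= LT).
  { unfold Cnt, LT. apply sumn_le. intros i _.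
    destruct (cell_spec N (phi N l spd tau i) HN (frac_range _)) as [_ [Hc1 Hc2]].
    destruct (Nat.ltb_spec (cell N (phi N l spd tau i)) g); simpl; [|unfold Rltb; destruct Rlt_dec; simpl; lra].
    unfold Rltb. destruct (Rlt_dec (phi N l spd tau i) gam) as [|Hn]; simpl; [lra|].
    exfalso. apply Hn.
    assert (INR (S (cell N (phi N l spd tau i))) <= INR g) by (apply le_INR; lia). rewrite S_INR in H0.
    apply Rmult_lt_reg_l with (INR N); auto. lra. }
  assert (H2 : LT <= LE).
  { unfold LT, LE. apply sumn_le. intros i _. unfold Rltb, Rleb.
    destruct Rlt_dec, Rle_dec; simpl; lra. }
  assert (H3 : LE <= Cnt N K l spd tau 0 (S g)).
  { unfold Cnt, LE. apply sumn_le. intros i _.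
    destruct (cell_spec N (phi N l spd tau i) HN (frac_range _)) as [_ [Hc1 Hc2]].
    unfold Rleb. destruct (Rle_dec (phi N l spd tau i) gam) as [Hle|]; simpl; [|destruct (_ <? _)%nat; simpl; lra].
    destruct (Nat.ltb_spec (cell N (phi N l spd tau i)) (S g)); simpl; [lra|].
    exfalso.
    assert (INR N * phi N l spd tau i <= INR N * gam) by (apply Rmult_le_compat_l; lra).
    assert (Hq : INR (cell N (phi N l spd tau i)) < INR (S g)) by (rewrite S_INR; lra).
    apply INR_lt in Hq. lia. }
  set (a := INR K / INR N).
  assert (Ha : 0 <= a <= 1).
  { unfold a. split.
    - unfold Rdiv. apply Rmult_le_pos; [apply pos_INR|left; apply Rinv_0_lt_compat; lra].
    - apply Rmult_le_reg_r with (INR N); auto. unfold Rdiv. rewrite Rmult_assoc, Rinv_l by lra.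
      rewrite Rmult_1_r, Rmult_1_l. apply le_INR; auto. }
  assert (E1 : INR K * INR (S g) / INR N = a * (INR g + 1)) by (unfold a; rewrite S_INR; field; lra).
  assert (E2 : INR K * (INR g - 1) / INR N = a * (INR g - 1)) by (unfold a; field; lra).
  assert (E3 : INR K * gam = a * (INR N * gam)) by (unfold a; field; lra).
  rewrite E1 in Hhi. rewrite E2 in Hlo. fold a in Hhi. rewrite E3.
  assert (a * INR g <= a * (INR N * gam)) by (apply Rmult_le_compat_l; lra).
  assert (a * (INR N * gam) <= a * (INR g + 1)) by (apply Rmult_le_compat_l; lra).
  split; apply Rabs_le; split; nra.
Qed.


Definition LEdev (m : nat) (ph y : R) : R :=
  if Rlt_dec y (INR m) then ind (Rleb ph (frac y)) - frac y else 0.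
Definition LTdev (m : nat) (ph y : R) : R :=
  if Rlt_dec y (INR m) then ind (Rltb ph (frac y)) - frac y else 0.

Lemma floor_nat y : 0 <= y -> exists Y : nat, INR Y = IZR (Int_part y) /\ y = INR Y + frac y.
Proof.
  intros Hy. destruct (Int_part_spec y) as [H1 H2].
  assert (Hz : (0 <= Int_part y)%Z).
  { destruct (Z_lt_le_dec (Int_part y) 0) as [Hl|Hl]; auto.
    assert (IZR (Int_part y) <= -1) by (apply IZR_le; lia). lra. }
  exists (Z.to_nat (Int_part y)). rewrite INR_Z2N by auto. split; auto. unfold frac; ring.
Qed.

Lemma LEg_formula m ph y : (0 < m)%nat -> 0 <= ph < 1 -> 0 <= y <= INR m ->
  sumn m (fun h => ind (Rleb (INR h + ph) y)) - y = LEdev m ph y /\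
  sumn m (fun h => ind (Rltb (INR h + ph) y)) - y = LTdev m ph y.
Proof.
  intros Hm Hph Hy. unfold LEdev, LTdev.
  destruct (Rlt_dec y (INR m)) as [Hlt|Hge].
  - destruct (floor_nat y (proj1 Hy)) as [Y [HY1 HY2]].
    pose proof (frac_range y) as Hf.
    assert (HYm : (Y < m)%nat) by (apply INR_lt; lra).
    split.
    + set (K0 := (Y + if Rleb ph (frac y) then 1 else 0)%nat).
      rewrite (sumn_ext m _ (fun h => ind (h <? K0)%nat)).
      * rewrite ltcount. replace (Nat.min K0 m) with K0 by (unfold K0; destruct (Rleb _ _); lia).
        unfold K0. rewrite plus_INR. destruct (Rleb ph (frac y)); simpl; lra.
      * intros h Hh. destruct (Nat.ltb_spec h K0) as [Hk|Hk]; unfold K0, Rleb in *;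
        destruct (Rle_dec ph (frac y)) as [Hp|Hp];
        destruct (Rle_dec (INR h + ph) y) as [Hq|Hq]; simpl; auto;
          exfalso.
        all: destruct (Nat.lt_trichotomy h Y) as [Hc|[Hc|Hc]].
        all: try (assert (INR (S h) <= INR Y) by (apply le_INR; lia); rewrite S_INR in *; lra).
        all: try (subst h; lia || lra).
        all: try (assert (INR (S Y) <= INR h) by (apply le_INR; lia); rewrite S_INR in *; lra).
        all: lia.
    + set (K0 := (Y + if Rltb ph (frac y) then 1 else 0)%nat).
      rewrite (sumn_ext m _ (fun h => ind (h <? K0)%nat)).
      * rewrite ltcount. replace (Nat.min K0 m) with K0 by (unfold K0; destruct (Rltb _ _); lia).
        unfold K0. rewrite plus_INR. destruct (Rltb ph (frac y)); simpl; lra.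
      * intros h Hh. destruct (Nat.ltb_spec h K0) as [Hk|Hk]; unfold K0, Rltb in *;
        destruct (Rlt_dec ph (frac y)) as [Hp|Hp];
        destruct (Rlt_dec (INR h + ph) y) as [Hq|Hq]; simpl; auto;
          exfalso.
        all: destruct (Nat.lt_trichotomy h Y) as [Hc|[Hc|Hc]].
        all: try (assert (INR (S h) <= INR Y) by (apply le_INR; lia); rewrite S_INR in *; lra).
        all: try (subst h; lia || lra).
        all: try (assert (INR (S Y) <= INR h) by (apply le_INR; lia); rewrite S_INR in *; lra).
        all: lia.
  - assert (Hym : y = INR m) by lra. subst y.
    assert (Hall : forall h, (h < m)%nat -> INR h + ph < INR m).
    { intros h Hh. assert (INR (S h) <= INR m) by (apply le_INR; lia). rewrite S_INR in *. lra. }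
    split.
    + rewrite (sumn_ext m _ (fun _ => 1)).
      * rewrite sumn_const. ring.
      * intros h Hh. unfold Rleb. destruct Rle_dec as [|Hn]; auto. specialize (Hall h Hh). lra.
    + rewrite (sumn_ext m _ (fun _ => 1)).
      * rewrite sumn_const. ring.
      * intros h Hh. unfold Rltb. destruct Rlt_dec as [|Hn]; auto. specialize (Hall h Hh). lra.
Qed.

Lemma pos_formula m sg v t : (0 < m)%nat ->
  exists P : nat, forall j : nat,
    frac ((sg + INR j) / INR m + INR v * t) =
    (INR ((j + P) mod m) + frac (sg + INR v * (INR m * t))) / INR m.
Proof.
  intros Hm. assert (Hmr : 0 < INR m) by (apply lt_0_INR; auto).
  set (X := sg + INR v * (INR m * t)). set (I := Int_part X).
  assert (Hmz : (Z.of_nat m <> 0)%Z) by lia.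
  pose proof (Z.div_mod I (Z.of_nat m) Hmz) as Hdm.
  pose proof (Z.mod_pos_bound I (Z.of_nat m) ltac:(lia)) as Hb.
  set (qz := (I / Z.of_nat m)%Z) in *. set (pz := (I mod Z.of_nat m)%Z) in *.
  exists (Z.to_nat pz). intros j.
  set (P := Z.to_nat pz).
  assert (HIP : IZR I = INR m * IZR qz + INR P).
  { unfold P. rewrite INR_Z2N by lia. rewrite Hdm at 1. rewrite plus_IZR, mult_IZR, <- INR_IZR_INZ. ring. }
  set (r := ((j + P) mod m)%nat). set (dq := ((j + P) / m)%nat).
  assert (Hjp : (j + P = m * dq + r)%nat) by (apply Nat.div_mod; lia).
  assert (Hr : (r < m)%nat) by (apply Nat.mod_upper_bound; lia).
  assert (Hrr : INR r + 1 <= INR m) by (rewrite <- S_INR; apply le_INR; lia).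
  assert (HjpR : INR j + INR P = INR m * INR dq + INR r)
    by (rewrite <- plus_INR, <- mult_INR, <- plus_INR; f_equal; auto).
  pose proof (frac_range X) as Hf.
  assert (HX : X = IZR I + frac X) by (unfold frac, I; ring).
  replace ((sg + INR j) / INR m + INR v * t) with
    (IZR (Z.of_nat dq + qz) + (INR r + frac X) / INR m).
  - apply frac_small. split.
    + apply Rmult_le_pos; [pose proof (pos_INR r); lra|left; apply Rinv_0_lt_compat; lra].
    + apply Rmult_lt_reg_r with (INR m); auto. unfold Rdiv. rewrite Rmult_assoc, Rinv_l by lra. lra.
  - rewrite plus_IZR, <- INR_IZR_INZ.
    assert (sg + INR j = INR j + X - INR v * (INR m * t)) by (unfold X; ring).
    rewrite H. set (fX := frac X) in *. rewrite HX, HIP. field_simplify_eq; [|lra]. nra.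
Qed.

Lemma group_count m sg v t a b : (0 < m)%nat -> 0 <= a -> a <= b -> b <= 1 ->
  sumn m (fun j => ind (in_intervalb a b (frac ((sg + INR j) / INR m + INR v * t)))) - INR m * (b - a)
  = LEdev m (frac (sg + INR v * (INR m * t))) (INR m * b)
    - LTdev m (frac (sg + INR v * (INR m * t))) (INR m * a).
Proof.
  intros Hm Ha Hab Hb. assert (Hmr : 0 < INR m) by (apply lt_0_INR; auto).
  set (ph := frac (sg + INR v * (INR m * t))).
  pose proof (frac_range (sg + INR v * (INR m * t))) as Hph. fold ph in Hph.
  destruct (pos_formula m sg v t Hm) as [P HP]. fold ph in HP.
  rewrite (sumn_ext m _ (fun j => (fun h => ind (Rleb (INR h + ph) (INR m * b)) - ind (Rltb (INR h + ph) (INR m * a))) ((j + P) mod m)%nat)).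
  - rewrite (sumn_rot m P (fun h => ind (Rleb (INR h + ph) (INR m * b)) - ind (Rltb (INR h + ph) (INR m * a))) Hm).
    rewrite sumn_minus.
    destruct (LEg_formula m ph (INR m * b) Hm Hph) as [E1 _].
    { split; [nra|]. rewrite <- (Rmult_1_r (INR m)) at 2. apply Rmult_le_compat_l; lra. }
    destruct (LEg_formula m ph (INR m * a) Hm Hph) as [_ E2].
    { split; [nra|]. rewrite <- (Rmult_1_r (INR m)) at 2. apply Rmult_le_compat_l; lra. }
    lra.
  - intros j Hj. rewrite HP. set (h := ((j + P) mod m)%nat).
    set (z := INR h + ph).
    assert (Hx : (z / INR m) * INR m = z) by (field; lra).
    unfold in_intervalb, Rleb, Rltb.
    destruct (Rle_dec a (z / INR m)); destruct (Rle_dec (z / INR m) b);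
    destruct (Rle_dec z (INR m * b)); destruct (Rlt_dec z (INR m * a)); simpl; try lra; nra.
Qed.


Lemma dev_sum_bound N K W l spd U m tau y : (0 < N)%nat -> (0 < W)%nat ->
  (forall i, (spd i <= W)%nat) -> Good N K W l spd U -> (K <= N)%nat -> 0 <= U ->
  Rabs (sumn K (fun i => LEdev m (phi N l spd tau i) y)) <= 2 * U + 2 /\
  Rabs (sumn K (fun i => LTdev m (phi N l spd tau i) y)) <= 2 * U + 2.
Proof.
  intros HN HW Hspd Hg HKN HU. unfold LEdev, LTdev.
  destruct (Rlt_dec y (INR m)).
  - destruct (phase_bound N K W l spd U tau (frac y) HN HW Hspd Hg HKN HU (frac_range y)) as [A B].
    rewrite !sumn_minus, !sumn_const. split; auto.
  - rewrite !sumn_const, Rmult_0_r, Rabs_R0. lra.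
Qed.

Lemma class_bound N K W l spd U m t a b : (0 < N)%nat -> (0 < W)%nat -> (0 < m)%nat ->
  (forall i, (spd i <= W)%nat) -> Good N K W l spd U -> (K <= N)%nat -> 0 <= U ->
  0 <= a -> a <= b -> b <= 1 ->
  Rabs (sumn K (fun i => sumn m (fun j =>
          ind (in_intervalb a b (frac ((INR (l i) / INR N + INR j) / INR m + INR (spd i) * t)))))
        - INR K * (INR m * (b - a))) <= 4 * U + 4.
Proof.
  intros HN HW Hm Hspd Hg HKN HU Ha Hab Hb.
  rewrite <- sumn_const, <- sumn_minus.
  rewrite (sumn_ext K _ (fun i => LEdev m (phi N l spd (INR m * t) i) (INR m * b)
                            - LTdev m (phi N l spd (INR m * t) i) (INR m * a))).
  - rewrite sumn_minus.
    destruct (dev_sum_bound N K W l spd U m (INR m * t) (INR m * b) HN HW Hspd Hg HKN HU) as [A _].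
    destruct (dev_sum_bound N K W l spd U m (INR m * t) (INR m * a) HN HW Hspd Hg HKN HU) as [_ B].
    apply Rabs_le_inv' in A. apply Rabs_le_inv' in B. apply Rabs_le. lra.
  - intros i Hi. unfold phi. apply group_count; auto.
Qed.


Lemma lnk_pos k : (2 <= k)%nat -> 0 < ln (INR k).
Proof.
  intros Hk. rewrite <- ln_1. apply ln_increasing; [lra|].
  assert (INR 2 <= INR k) by (apply le_INR; auto). simpl in H. lra.
Qed.

Lemma union_num k : (2 <= k)%nat ->
  0 < 4 * sqrt (INR k * ln (INR k)) /\
  2 * INR (k * k * (S k * S k)) *
    exp (- (4 * sqrt (INR k * ln (INR k)) * (4 * sqrt (INR k * ln (INR k)))) / (2 * INR k)) < 1.
Proof.
  intros Hk. pose proof (lnk_pos k Hk) as Hl.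
  assert (Hkr : 2 <= INR k) by (apply (le_INR 2); auto).
  assert (Hx : 0 < INR k * ln (INR k)) by nra.
  split.
  - assert (0 < sqrt (INR k * ln (INR k))) by (apply sqrt_lt_R0; auto). lra.
  - replace (- (4 * sqrt (INR k * ln (INR k)) * (4 * sqrt (INR k * ln (INR k)))) / (2 * INR k))
      with (- (INR 8 * ln (INR k))).
    2:{ replace (4 * sqrt (INR k * ln (INR k)) * (4 * sqrt (INR k * ln (INR k))))
          with (16 * (sqrt (INR k * ln (INR k)) * sqrt (INR k * ln (INR k)))) by ring.
        rewrite sqrt_sqrt by lra. simpl INR. field. lra. }
    rewrite <- ln_pow by lra. rewrite exp_Ropp, exp_ln by (apply pow_lt; lra).
    rewrite <- pow_INR.
    assert (Hn : (2 * (k * k * (S k * S k)) < k ^ 8)%nat).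
    { assert (H4 : (16 <= k * k * k * k)%nat) by nia.
      assert (H5 : (S k * S k <= 4 * (k * k))%nat) by nia.
      replace (k ^ 8)%nat with ((k * k * k * k) * (k * k * k * k))%nat by (simpl; ring).
      nia. }
    apply lt_INR in Hn. rewrite mult_INR in Hn. simpl (INR 2) in Hn.
    assert (H0 : 0 <= INR (k * k * (S k * S k))) by apply pos_INR.
    assert (Hp : 0 < INR (k ^ 8)) by lra.
    apply Rmult_lt_reg_r with (INR (k ^ 8)); auto.
    rewrite Rmult_assoc, Rinv_l by lra. lra.
Qed.

Lemma final_num k : (2 <= k)%nat ->
  16 * (4 * sqrt (INR k * ln (INR k))) + 8 <= 72 * sqrt (INR k * log2 (INR k)).
Proof.
  intros Hk. pose proof (lnk_pos k Hk) as Hl.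
  assert (Hkr : 2 <= INR k) by (apply (le_INR 2); auto).
  assert (Hl2 : 0 < ln 2) by (rewrite <- ln_1; apply ln_increasing; lra).
  assert (Hl2' : ln 2 < 1).
  { rewrite <- ln_exp with 1. apply ln_increasing; [lra|].
    pose proof (exp_ineq1 1 ltac:(lra)). lra. }
  assert (Hlog : ln (INR k) <= log2 (INR k)).
  { unfold log2. apply Rmult_le_reg_r with (ln 2); auto. unfold Rdiv.
    rewrite Rmult_assoc, Rinv_l by lra. nra. }
  assert (Hlog1 : 1 <= log2 (INR k)).
  { unfold log2. apply Rmult_le_reg_r with (ln 2); auto. unfold Rdiv.
    rewrite Rmult_assoc, Rinv_l by lra. rewrite Rmult_1_l, Rmult_1_r.
    destruct (Rle_lt_or_eq_dec 2 (INR k) Hkr) as [Hlt|Heq]; [left; apply ln_increasing; lra|right; rewrite Heq; auto]. }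
  assert (A : sqrt (INR k * ln (INR k)) <= sqrt (INR k * log2 (INR k))).
  { apply sqrt_le_1_alt. apply Rmult_le_compat_l; lra. }
  assert (B : 1 <= sqrt (INR k * log2 (INR k))).
  { rewrite <- sqrt_1. apply sqrt_le_1_alt. nra. }
  lra.
Qed.


Lemma pos_range sg j m : 0 <= sg < 1 -> (j < m)%nat -> 0 <= (sg + INR j) / INR m < 1.
Proof.
  intros Hs Hj. assert (Hm : 0 < INR m) by (apply lt_0_INR; lia).
  assert (INR j + 1 <= INR m) by (rewrite <- S_INR; apply le_INR; lia).
  pose proof (pos_INR j). split.
  - apply Rmult_le_pos; [lra|left; apply Rinv_0_lt_compat; lra].
  - apply Rmult_lt_reg_r with (INR m); auto. unfold Rdiv. rewrite Rmult_assoc, Rinv_l by lra. lra.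
Qed.

Lemma sig_range x N : (x < N)%nat -> 0 <= INR x / INR N < 1.
Proof.
  intros H. assert (Hm : 0 < INR N) by (apply lt_0_INR; lia).
  assert (INR x + 1 <= INR N) by (rewrite <- S_INR; apply le_INR; lia).
  pose proof (pos_INR x). split.
  - apply Rmult_le_pos; [lra|left; apply Rinv_0_lt_compat; lra].
  - apply Rmult_lt_reg_r with (INR N); auto. unfold Rdiv. rewrite Rmult_assoc, Rinv_l by lra. lra.
Qed.

Lemma divmod_block i m j : (j < m)%nat -> ((i * m + j) / m = i)%nat /\ ((i * m + j) mod m = j)%nat.
Proof.
  intros Hj. split.
  - symmetry. apply Nat.div_unique with j; lia.
  - symmetry. apply Nat.mod_unique with i; lia.
Qed.

Theorem mainTheorem6 :
  exists C : R, C > 0 /\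
    forall n k : nat, (2 <= k)%nat -> (k <= n)%nat ->
      exists (v : nat -> Z) (s : nat -> R),
        takes_exactly n k v /\
        (forall i, (i < n)%nat -> 0 <= s i < 1) /\
        forall t : R,
          bias_le n (fun i => s i + IZR (v i) * t)
                  (C * sqrt (INR k * log2 (INR k))).
Proof.
  exists 72. split; [lra|].
  intros n k Hk Hkn.
  set (q := (n / k)%nat). set (rr := (n mod k)%nat).
  assert (Hn : (n = k * q + rr)%nat) by (apply Nat.div_mod; lia).
  assert (Hrr : (rr < k)%nat) by (apply Nat.mod_upper_bound; lia).
  assert (Hq : (1 <= q)%nat) by (destruct q; nia).
  set (m1 := S q). set (A1 := (rr * m1)%nat).
  assert (Hn' : (n = A1 + (k - rr) * q)%nat) by (unfold A1, m1; nia).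
  set (u := 4 * sqrt (INR k * ln (INR k))).
  destruct (union_num k Hk) as [Hu Hun]. fold u in Hu, Hun.
  set (spd1 := fun i => Nat.min (S i) k).
  set (spd2 := fun i => Nat.min (S (rr + i)) k).
  assert (Hs1 : forall i, (spd1 i <= k)%nat) by (intros; unfold spd1; lia).
  assert (Hs2 : forall i, (spd2 i <= k)%nat) by (intros; unfold spd2; lia).
  destruct (good_exists k rr k spd1 u ltac:(lia) ltac:(lia) ltac:(lia) Hu Hun) as [l1 [Hl1 Hg1]].
  destruct (good_exists k (k - rr) k spd2 u ltac:(lia) ltac:(lia) ltac:(lia) Hu Hun) as [l2 [Hl2 Hg2]].
  exists (fun r => Z.of_nat (if (r <? A1)%nat then S (r / m1)%nat else S (rr + (r - A1) / q)%nat)).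
  exists (fun r => if (r <? A1)%nat then (INR (l1 (r / m1)%nat) / INR k + INR (r mod m1)) / INR m1
                 else (INR (l2 ((r - A1) / q)%nat) / INR k + INR ((r - A1) mod q)%nat) / INR q).
  split; [|split].
  -
    exists (map (fun i => Z.of_nat (S i)) (seq 0 k)). split; [|split; [|split]].
    + apply NoDup_map_NoDup_ForallPairs; [intros x y _ _ H; lia|apply seq_NoDup].
    + rewrite length_map, length_seq. reflexivity.
    + intros r Hr. apply in_map_iff.
      destruct (Nat.ltb_spec r A1) as [HA|HA].
      * exists (r / m1)%nat. split; auto. apply in_seq.
        assert (r / m1 < rr)%nat by (apply Nat.div_lt_upper_bound; unfold A1 in HA; lia). lia.
      * exists (rr + (r - A1) / q)%nat. split; auto. apply in_seq.
        assert ((r - A1) / q < k - rr)%nat by (apply Nat.div_lt_upper_bound; lia). lia.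
    + intros z Hz. apply in_map_iff in Hz as [x [<- Hx]]. apply in_seq in Hx.
      destruct (Nat.lt_ge_cases x rr) as [Hxr|Hxr].
      * exists (x * m1)%nat. split; [unfold A1 in *; nia|].
        destruct (Nat.ltb_spec (x * m1) A1); [|unfold A1 in *; nia].
        rewrite Nat.div_mul by lia. reflexivity.
      * exists (A1 + (x - rr) * q)%nat. split; [nia|].
        destruct (Nat.ltb_spec (A1 + (x - rr) * q) A1); [nia|].
        replace (A1 + (x - rr) * q - A1)%nat with ((x - rr) * q)%nat by lia.
        rewrite Nat.div_mul by lia. f_equal. lia.
  -
    intros r Hr. destruct (Nat.ltb_spec r A1) as [HA|HA].
    + apply pos_range; [apply sig_range, Hl1|apply Nat.mod_upper_bound; lia].
      apply Nat.div_lt_upper_bound; unfold A1 in HA; lia.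
    + apply pos_range; [apply sig_range, Hl2|apply Nat.mod_upper_bound; lia].
      apply Nat.div_lt_upper_bound; lia.
  -
    intros t a b Ha Hab Hb. unfold count_in. rewrite count_sumn. simpl (0 + _)%nat.
    set (F := fun i => ind (in_intervalb a b (frac
       ((if (i <? A1)%nat then (INR (l1 (i / m1)%nat) / INR k + INR (i mod m1)) / INR m1
         else (INR (l2 ((i - A1) / q)%nat) / INR k + INR ((i - A1) mod q)%nat) / INR q) +
        IZR (Z.of_nat (if (i <? A1)%nat then S (i / m1)%nat else S (rr + (i - A1) / q)%nat)) * t)))).
    assert (Hsplit : sumn n F = sumn A1 F + sumn ((k - rr) * q) (fun i => F (A1 + i)%nat))
      by (rewrite Hn' at 1; apply sumn_app).
    change (sumn n (fun i => F i)) with (sumn n F). rewrite Hsplit.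
    assert (E1 : sumn A1 F = sumn rr (fun i => sumn m1 (fun j =>
          ind (in_intervalb a b (frac ((INR (l1 i) / INR k + INR j) / INR m1 + INR (spd1 i) * t)))))).
    { unfold A1 at 1. rewrite sumn_block. apply sumn_ext. intros i Hi. apply sumn_ext. intros j Hj.
      destruct (divmod_block i m1 j Hj) as [D1 D2].
      unfold F. destruct (Nat.ltb_spec (i * m1 + j) A1); [|unfold A1 in *; nia].
      rewrite D1, D2. unfold spd1. rewrite <- INR_IZR_INZ.
      replace (Nat.min (S i) k) with (S i) by lia. reflexivity. }
    assert (E2 : sumn ((k - rr) * q) (fun i => F (A1 + i)%nat) = sumn (k - rr) (fun i => sumn q (fun j =>
          ind (in_intervalb a b (frac ((INR (l2 i) / INR k + INR j) / INR q + INR (spd2 i) * t)))))).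
    { rewrite sumn_block. apply sumn_ext. intros i Hi. apply sumn_ext. intros j Hj.
      destruct (divmod_block i q j Hj) as [D1 D2].
      unfold F. destruct (Nat.ltb_spec (A1 + (i * q + j)) A1); [lia|].
      replace (A1 + (i * q + j) - A1)%nat with (i * q + j)%nat by lia.
      rewrite D1, D2. unfold spd2. rewrite <- INR_IZR_INZ.
      replace (Nat.min (S (rr + i)) k) with (S (rr + i)) by lia. reflexivity. }
    rewrite E1, E2.
    assert (B1 := class_bound k rr k l1 spd1 (2 * u) m1 t a b ltac:(lia) ltac:(lia) ltac:(unfold m1; lia)
                    Hs1 Hg1 ltac:(lia) ltac:(lra) Ha Hab Hb).
    assert (B2 := class_bound k (k - rr) k l2 spd2 (2 * u) q t a b ltac:(lia) ltac:(lia) ltac:(lia)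
                    Hs2 Hg2 ltac:(lia) ltac:(lra) Ha Hab Hb).
    assert (HnR : INR n = INR rr * INR m1 + INR (k - rr) * INR q).
    { rewrite Hn' at 1. unfold A1. rewrite plus_INR, !mult_INR. reflexivity. }
    rewrite HnR.
    apply Rabs_le_inv' in B1. apply Rabs_le_inv' in B2.
    pose proof (final_num k Hk). fold u in H.
    apply Rabs_le. lra.
Qed.
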